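(* Let $q>2$ be a prime power and $k\ge 3$ an integer. Then there exists a linear AOA$(1,k-1,k,q)$.
   Context: An orthogonal array OA$(t,k,v)$ (with $1\le t\le k$) is a $v^t\times k$ array with entries from a set $X$ of size $v$ such that, for every choice of $t$ of its columns, each $t$-tuple in $X^t$ appears exactly once as a row of the corresponding $v^t\times t$ subarray. For integers $1\le s\le t\le k$, an augmented orthogonal array AOA$(s,t,k,v)$ is a $v^t\times(k+1)$ array $A$ such that: (1) the first $k$ columns of $A$ form an OA$(t,k,v)$ on a symbol set $X$ of size $v$; (2) the last column of $A$ has entries from a set $Y$ of size $v^{t-s}$; (3) for any choice of $s$ of the first $k$ columns, these $s$ columns together with the last column contain every $(s+1)$-tuple of $X^s\times Y$ exactly once as a row. For a prime power $q$, an AOA$(s,t,k,q)$ is linear if $X=\mathbb{F}_q$, $Y=\mathbb{F}_q^{t-s}$, and its set of rows, regarded as vectors in $\mathbb{F}_q^{k}\times\mathbb{F}_q^{t-s}=\mathbb{F}_q^{k+t-s}$, is an $\mathbb{F}_q$-linear subspace. *)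

(* Defs.v *)
From HB Require Import structures.
From mathcomp Require Import all_boot all_order all_algebra all_fingroup all_field.
Set Implicit Arguments. Unset Strict Implicit. Unset Printing Implicit Defensive.
Import GRing.Theory.
Local Open Scope ring_scope.

Definition is_OA (X : finType) (t k N : nat) (A : 'I_N -> 'I_k -> X) : Prop :=
  [/\ (1 <= t <= k)%N, N = (#|X| ^ t)%N &
      forall S : {set 'I_k}, #|S| = t -> forall f : 'I_k -> X,
        #|[set r : 'I_N | [forall j in S, A r j == f j]]| = 1%N].

Definition is_AOA (X Y : finType) (s t k N : nat)
    (A : 'I_N -> 'I_k -> X) (B : 'I_N -> Y) : Prop :=
  [/\ (1 <= s <= t)%N, is_OA t A, #|Y| = (#|X| ^ (t - s))%N &
      forall S : {set 'I_k}, #|S| = s -> forall (f : 'I_k -> X) (y : Y),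
        #|[set r : 'I_N | [forall j in S, A r j == f j] && (B r == y)]| = 1%N].

(* Linear AOA(s,t,k,q) over the finite field F (q = #|F|): X = F, Y = F^(t-s);
   each row is a vector of F^(k + (t-s)) = F^k x F^(t-s) (first k coordinates = the
   first k columns, the last t-s coordinates = the entry of the last column), and the
   set of rows is an F-linear subspace. *)
Definition linear_AOA (F : finFieldType) (s t k : nat) : Prop :=
  exists R : 'I_(#|F| ^ t) -> 'rV[F]_(k + (t - s)),
    is_AOA s t (fun r j => R r 0 (lshift (t - s) j)) (fun r => rsubmx (R r))
    /\ (exists r, R r = 0)
    /\ (forall (a : F) (r1 r2 : 'I_(#|F| ^ t)), exists r3, R r3 = a *: R r1 + R r2).

(* Main.v *)
Require Import Defs.
From HB Require Import structures.
From mathcomp Require Import all_boot all_order all_algebra all_fingroup all_field.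
From mathcomp Require Import ring zify.
Set Implicit Arguments. Unset Strict Implicit. Unset Printing Implicit Defensive.
Import GRing.Theory.
Local Open Scope ring_scope.

Lemma card_bij_set (I T : finType) (e : I -> T) (g : T -> I) (P : pred T) :
  cancel e g -> cancel g e -> #|[set r | P (e r)]| = #|[set x | P x]|.
Proof.
move=> eK gK; rewrite -(card_imset _ (can_inj eK)); apply: eq_card => x.
rewrite [in RHS]inE; apply/imsetP/idP => [[r]|Px].
  by rewrite inE => Pr ->.
by exists (g x); rewrite ?inE gK.
Qed.

Lemma card_inj1 (T U : finType) (L : T -> U) (y : U) :
  injective L -> #|T| = #|U| -> #|[set x | L x == y]| = 1%N.
Proof.
move=> inj hc.
have /codomP [x ->] : y \in codom L by apply: inj_card_onto => //; rewrite hc.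
apply/eqP/cards1P; exists x; apply/setP => z; rewrite !inE.
by apply/eqP/eqP => [/inj|->].
Qed.

Section Constr.
Variables (F : finFieldType) (p : nat) (a : F).
Hypothesis a0 : a != 0.
Hypothesis ap : a + (p.+1)%:R != 0.

Definition Acol (x : 'rV[F]_(p.+2)) : 'rV[F]_(p.+3) :=
  \row_j (if unlift ord_max j is Some i then x 0 i else \sum_i x 0 i).

Definition Bcol (x : 'rV[F]_(p.+2)) : 'rV[F]_(p.+1) :=
  \row_i (a * x 0 (widen_ord (leqnSn _) i) - x 0 ord_max).

Lemma Acol_lin c x y : Acol (c *: x + y) = c *: Acol x + Acol y.
Proof.
apply/rowP => j; rewrite !mxE; case: (unlift _ j) => [i|]; rewrite ?mxE //.
rewrite mulr_sumr -big_split /=; apply: eq_bigr => i _; by rewrite !mxE.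
Qed.

Lemma Bcol_lin c x y : Bcol (c *: x + y) = c *: Bcol x + Bcol y.
Proof. apply/rowP => i; rewrite !mxE; ring. Qed.

Lemma Acol_sub x y : Acol (x - y) = Acol x - Acol y.
Proof. by rewrite addrC -scaleN1r Acol_lin scaleN1r addrC. Qed.

Lemma Bcol_sub x y : Bcol (x - y) = Bcol x - Bcol y.
Proof. by rewrite addrC -scaleN1r Bcol_lin scaleN1r addrC. Qed.

Lemma sum_split (x : 'rV[F]_(p.+2)) :
  \sum_i x 0 i = \sum_(i < p.+1) x 0 (widen_ord (leqnSn _) i) + x 0 ord_max.
Proof. by rewrite big_ord_recr. Qed.

Lemma lift_widen (i : 'I_(p.+1)) : lift ord_max i = widen_ord (leqnSn _) i.
Proof. by apply: val_inj; rewrite /= /bump leqNgt ltn_ord. Qed.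
Lemma kerA (m : 'I_(p.+3)) (x : 'rV[F]_(p.+2)) :
  (forall j, j != m -> Acol x 0 j = 0) -> x = 0.
Proof.
case: (unliftP ord_max m) => [m'|] -> H.
  have Hi : forall i, i != m' -> x 0 i = 0.
    move=> i ne; have := H (lift ord_max i); rewrite mxE liftK; apply.
    by apply: contra ne => /eqP /lift_inj ->.
  have := H ord_max; rewrite mxE unlift_none (bigD1 m') //= big1 ?addr0.
    move=> h; apply/rowP => i; rewrite mxE.
    have [->|ne] := eqVneq i m'; [apply: h | exact: Hi].
    exact: neq_lift.
  by move=> i; apply: Hi.
apply/rowP => i; rewrite mxE.
have := H (lift ord_max i); rewrite mxE liftK; apply.
by rewrite eq_sym neq_lift.
Qed.

Lemma kerB (j : 'I_(p.+3)) (x : 'rV[F]_(p.+2)) :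
  Acol x 0 j = 0 -> Bcol x = 0 -> x = 0.
Proof.
move=> hA hB.
have hb : forall i : 'I_(p.+1), a * x 0 (widen_ord (leqnSn _) i) = x 0 ord_max.
  move=> i; have /rowP /(_ i) := hB; rewrite !mxE => /eqP; by rewrite subr_eq0 => /eqP.
have hz : x 0 ord_max = 0.
  move: hA; rewrite mxE; case: (unliftP ord_max j) => [i|] _.
    case: (unliftP ord_max i) => [i'|] ->.
      rewrite lift_widen => h; by rewrite -(hb i') h mulr0.
    by [].
  move=> h; have : a * \sum_i x 0 i = 0 by rewrite h mulr0.
  rewrite sum_split mulrDr mulr_sumr (eq_bigr (fun _ => x 0 ord_max)); last by move=> i _; apply: hb.
  rewrite sumr_const card_ord -mulr_natl -mulrDl => /eqP; rewrite mulf_eq0.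
  by rewrite addrC (negbTE ap) => /eqP.
apply/rowP => i; rewrite mxE.
case: (unliftP ord_max i) => [i'|] ->; last by [].
rewrite lift_widen; apply/eqP; rewrite -(mulrI_eq0 _ (lregP a0)) hb hz //.
Qed.
End Constr.

Lemma forall_compl (F : finFieldType) (p : nat) (m : 'I_(p.+3)) (f : 'I_(p.+3) -> F) x :
  [forall j in ~: [set m], Acol x 0 j == f j] =
  ((\row_i Acol x 0 (lift m i)) == \row_i f (lift m i)).
Proof.
apply/forall_inP/eqP => [H|H j].
  apply/rowP => i; rewrite [LHS]mxE [RHS]mxE; apply/eqP; apply: H.
  by rewrite !inE eq_sym neq_lift.
rewrite !inE; case: (unliftP m j) => [i|] ->; last by rewrite eqxx.
by move=> _; have /rowP /(_ i) := H; rewrite [LHS]mxE [RHS]mxE => ->.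
Qed.

Lemma Acol_subE (F : finFieldType) (p : nat) (x1 x2 : 'rV[F]_(p.+2)) j :
  Acol (x1 - x2) 0 j = Acol x1 0 j - Acol x2 0 j.
Proof.
rewrite !mxE; case: (unlift _ j) => [i|]; rewrite ?mxE //.
rewrite -sumrB; apply: eq_bigr => i _; by rewrite !mxE.
Qed.

Lemma forall_set1 (T : finType) (j : T) (P : pred T) :
  [forall j' in [set j], P j'] = P j.
Proof.
apply/forall_inP/idP => [H|H j']; first by apply: H; rewrite inE.
by rewrite inE => /eqP ->.
Qed.

Theorem theorem3p6 (F : finFieldType) (k : nat) :
  (2 < #|F|)%N -> (3 <= k)%N -> linear_AOA F 1 (k.-1) k.
Proof.
move=> hF; case: k => [|[|[|p]]] // _.
have hc := cardsC [set (0:F); - (p.+1)%:R]; rewrite cards2 in hc.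
set S0 := [set _; _] in hc.
have : (0 < #|~: S0|)%N.
  move: hc; set b := (_ != _) => hc.
  have : (b.+1 <= 2)%N by case: b hc.
  move=> hb; rewrite -hc in hF; move: hb hF; move: (nat_of_bool b) => n; lia.
move=> /card_gt0P [a]; rewrite /S0 !inE => /norP [a0 ap].
have ap' : a + (p.+1)%:R != 0 by rewrite addr_eq0.
have E : (#|F| ^ (p.+2))%N = #|{: 'rV[F]_(p.+2)}| by rewrite card_mx mul1n.
pose e (r : 'I_(#|F| ^ (p.+2))) : 'rV[F]_(p.+2) := enum_val (cast_ord E r).
pose g (x : 'rV[F]_(p.+2)) : 'I_(#|F| ^ (p.+2)) := cast_ord (esym E) (enum_rank x).
have eK : cancel e g by move=> r; rewrite /e /g enum_valK cast_ordK.
have gK : cancel g e by move=> x; rewrite /e /g cast_ordKV enum_rankK.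
pose R r := row_mx (Acol (e r)) (Bcol a (e r)).
have Rlin : forall (c : F) r1 r2, exists r3, R r3 = c *: R r1 + R r2.
  move=> c r1 r2; exists (g (c *: e r1 + e r2)).
  by rewrite /R gK Acol_lin Bcol_lin scale_row_mx add_row_mx.
exists R; split; last first.
  split => //; have [r3 h] := Rlin (-1) (g 0) (g 0).
  by exists r3; rewrite h scaleN1r addNr.
split => //; last first.
- move=> S hS f y.
  have /cards1P [j ->] : #|S| == 1%N by rewrite hS.
  pose P (x : 'rV[F]_(p.+2)) := row_mx (\row_(i<1) Acol x 0 j) (Bcol a x) == row_mx (\row_(i<1) f j) y.
  transitivity #|[set r | P (e r)]|.
    apply: eq_card => r; rewrite !inE forall_set1 /R row_mxEl row_mxKr /P.
    apply/andP/eqP => [[/eqP h1 /eqP h2]|/eq_row_mx [h1 h2]].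
      by rewrite h1 h2.
    split; apply/eqP => //; have /rowP /(_ 0) := h1; by rewrite !mxE.
  rewrite (card_bij_set P eK gK); apply: card_inj1; last by rewrite !card_mx.
  move=> x1 x2 /eq_row_mx [/rowP /(_ 0) h1 h2].
  apply/eqP; rewrite -subr_eq0; apply/eqP; apply: (kerB a0 ap' (j := j)).
    by rewrite Acol_subE; move: h1; rewrite !mxE => ->; rewrite subrr.
  by rewrite Bcol_sub h2 subrr.
- by rewrite card_mx mul1n.
split => //= S hS f.
have /cards1P [m hm] : #|~: S| == 1%N.
  by apply/eqP; have := cardsC S; rewrite hS card_ord; lia.
have -> : S = ~: [set m] by rewrite -hm setCK.
pose P (x : 'rV[F]_(p.+2)) := (\row_i Acol x 0 (lift m i)) == \row_i f (lift m i).
transitivity #|[set r | P (e r)]|.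
  apply: eq_card => r; rewrite inE [in RHS]inE /P -forall_compl.
  by apply: eq_forallb => j; rewrite /R row_mxEl.
rewrite (card_bij_set P eK gK); apply: card_inj1 => //.
move=> x1 x2 /rowP h.
apply/eqP; rewrite -subr_eq0; apply/eqP; apply: (kerA (m := m)) => j.
case: (unliftP m j) => [i|] ->; last by rewrite eqxx.
move=> _; rewrite Acol_subE; have := h i; rewrite [LHS]mxE [RHS]mxE => ->.
by rewrite subrr.
Qed.
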